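(* For $\alpha\in[-1,1]$ let $\rho(\alpha)=\tfrac12(I+\alpha\sigma_z)=\mathrm{diag}\big(\tfrac{1+\alpha}{2},\tfrac{1-\alpha}{2}\big)$. For all $\alpha,\beta\in[-1,1]$, with $z_-=\min(\alpha,\beta)$, $z_+=\max(\alpha,\beta)$, the matrix $$\Pi(\alpha,\beta)=\frac12\begin{pmatrix}1+z_- & 0&0&\sqrt{(1+z_-)(1-z_+)}\\ 0&\max(\beta-\alpha,0)&0&0\\0&0&\max(\alpha-\beta,0)&0\\ \sqrt{(1+z_-)(1-z_+)}&0&0&1-z_+\end{pmatrix}$$ is an optimal coupling of $\rho(\alpha)$ and $\rho(\beta)$ for the cost $C_{\mathrm{symm},p}$, and $$D^p_{\mathrm{symm},p}(\rho(\alpha),\rho(\beta))=2^p\Big(1+\tfrac12|\alpha-\beta|-\sqrt{(1+\min(\alpha,\beta))(1-\max(\alpha,\beta))}\Big).$$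
   Context: Qubit setting: $\mathcal{H}=\mathbb{C}^2$, $\mathcal{H}^*$ is identified with $\mathbb{C}^2$ via the dual basis, and $A^T$ is the usual matrix transpose; operators on $\mathcal{H}\otimes\mathcal{H}^*$ are $4\times4$ matrices in the basis $e_1\otimes e_1^*,e_1\otimes e_2^*,e_2\otimes e_1^*,e_2\otimes e_2^*$. Pauli matrices: $\sigma_1=\sigma_x=\begin{pmatrix}0&1\\1&0\end{pmatrix}$, $\sigma_2=\sigma_y=\begin{pmatrix}0&-i\\i&0\end{pmatrix}$, $\sigma_3=\sigma_z=\begin{pmatrix}1&0\\0&-1\end{pmatrix}$. The set of couplings of states $\rho,\omega$ is $\mathcal{C}(\rho,\omega)=\{\Pi\in\mathcal{S}(\mathcal{H}\otimes\mathcal{H}^* ):\mathrm{tr}_{\mathcal{H}^*}[\Pi]=\omega,\ \mathrm{tr}_{\mathcal{H}}[\Pi]=\rho^T\}$. For $p\ge1$, $C_{\mathrm{symm},p}=\sum_{k=1}^3|\sigma_k\otimes I^T-I\otimes\sigma_k^T|^p$, which equals the matrix $\begin{pmatrix}2^p&0&0&-2^p\\0&2^{p+1}&0&0\\0&0&2^{p+1}&0\\-2^p&0&0&2^p\end{pmatrix}$, and $D_{\mathrm{symm},p}(\rho,\omega)=\big(\min_{\Pi\in\mathcal{C}(\rho,\omega)}\mathrm{tr}[\Pi C_{\mathrm{symm},p}]\big)^{1/p}$. *)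

(* Defs.v *)
From HB Require Import structures.
From mathcomp Require Import all_boot all_order all_algebra.
From mathcomp Require Import all_classical all_reals all_analysis.
From mathcomp Require Import complex.
Set Implicit Arguments. Unset Strict Implicit. Unset Printing Implicit Defensive.
Import Order.TTheory GRing.Theory Num.Theory.
Local Open Scope ring_scope.
Local Open Scope complex_scope.
Local Open Scope classical_set_scope.

Section QubitDefs.
Variable R : realType.
Local Notation C := R[i].

(* positive semidefinite: <v, A v> >= 0 for all v (order of the numClosedField C,
   so the quadratic form is in particular real) *)
Definition psd (n : nat) (A : 'M[C]_n) : Prop :=
  forall v : 'cV[C]_n, 0 <= ((map_mx Num.conj v)^T *m A *m v) 0 0.

Definition is_state (n : nat) (A : 'M[C]_n) : Prop := psd A /\ \tr A = 1.

(* basis index of e_i (x) e_j^* in C^2 (x) C^2*, ordered e1e1*, e1e2*, e2e1*, e2e2* *)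
Definition tidx (i j : 'I_2) : 'I_4 := inord (2 * i + j).

Definition ptr2 (P : 'M[C]_4) : 'M[C]_2 :=
  \matrix_(i < 2, i' < 2) \sum_(j < 2) P (tidx i j) (tidx i' j).

Definition ptr1 (P : 'M[C]_4) : 'M[C]_2 :=
  \matrix_(j < 2, j' < 2) \sum_(i < 2) P (tidx i j) (tidx i j').

Definition couplings (rho omega : 'M[C]_2) : set 'M[C]_4 :=
  [set P | is_state P /\ ptr2 P = omega /\ ptr1 P = rho^T].

Definition Csymm (p : R) : 'M[C]_4 :=
  let a := (2 `^ p)%:C in
  let b := (2 `^ (p + 1))%:C in
  \matrix_(k < 4, l < 4)
    match nat_of_ord k, nat_of_ord l with
    | 0%N, 0%N => a | 0%N, 3%N => - a
    | 1%N, 1%N => b | 2%N, 2%N => b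
    | 3%N, 0%N => - a | 3%N, 3%N => a
    | _, _ => 0
    end.

(* transport cost tr[P C_symm,p] (a real number for states P) *)
Definition cost (p : R) (P : 'M[C]_4) : R := complex.Re (\tr (P *m Csymm p)).

Definition Dsymm (p : R) (rho omega : 'M[C]_2) : R :=
  (inf [set cost p P | P in couplings rho omega]) `^ p^-1.

Definition optimal_coupling (p : R) (rho omega : 'M[C]_2) (P : 'M[C]_4) : Prop :=
  P \in couplings rho omega /\
  forall Q, Q \in couplings rho omega -> cost p P <= cost p Q.

Definition rhoz (a : R) : 'M[C]_2 :=
  \matrix_(i < 2, j < 2)
    if (i == j) then (if nat_of_ord i == 0%N then ((1 + a) / 2)%:C else ((1 - a) / 2)%:C)
    else 0.

Definition Pi_ab (a b : R) : 'M[C]_4 :=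
  let zm := Num.min a b in
  let zp := Num.max a b in
  let s := Num.sqrt ((1 + zm) * (1 - zp)) in
  \matrix_(k < 4, l < 4)
    match nat_of_ord k, nat_of_ord l with
    | 0%N, 0%N => ((1 + zm) / 2)%:C
    | 0%N, 3%N => (s / 2)%:C
    | 1%N, 1%N => (Num.max (b - a) 0 / 2)%:C
    | 2%N, 2%N => (Num.max (a - b) 0 / 2)%:C
    | 3%N, 0%N => (s / 2)%:C
    | 3%N, 3%N => ((1 - zp) / 2)%:C
    | _, _ => 0
    end.

End QubitDefs.

(* Main.v *)
Require Import Defs.
From HB Require Import structures.
From mathcomp Require Import all_boot all_order all_algebra.
From mathcomp Require Import all_classical all_reals all_analysis.
From mathcomp Require Import complex ring lra.
Import Order.TTheory GRing.Theory Num.Theory.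
Local Open Scope ring_scope.
Local Open Scope complex_scope.

Section S.
Variable R : realType.
Local Notation C := R[i].

Lemma quad_nonneg (x y s a c : R) : 0<=x -> 0<=y -> s^+2 = x*y ->
  0 <= x*a^+2 + 2*s*a*c + y*c^+2.
Proof.
move=> hx hy hs; move: hx hs.
have [->|xp] := eqVneq x 0 => hx hs.
  have : s ^+ 2 = 0 by rewrite hs mul0r.
  move/eqP; rewrite sqrf_eq0 => /eqP ->. nra.
have xpos : 0 < x by rewrite lt0r xp.
rewrite -(pmulr_rge0 _ xpos).
have -> : x * (x * a ^+ 2 + 2 * s * a * c + y * c ^+ 2) = (x*a + s*c)^+2.
  rewrite sqrrD !exprMn hs; ring.
exact: sqr_ge0.
Qed.

Lemma sum4 (F : 'I_4 -> C) : \sum_(i < 4) F i =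
  F (inord 0) + F (inord 1) + F (inord 2) + F (inord 3).
Proof.
rewrite !big_ord_recl big_ord0 addr0 !addrA.
by congr (_ + _ + _ + _); congr F; apply: val_inj; rewrite /= inordK.
Qed.

Lemma sum4R (F : 'I_4 -> R) : \sum_(i < 4) F i =
  F (inord 0) + F (inord 1) + F (inord 2) + F (inord 3).
Proof.
rewrite !big_ord_recl big_ord0 addr0 !addrA.
by congr (_ + _ + _ + _); congr F; apply: val_inj; rewrite /= inordK.
Qed.

Lemma sum2 (F : 'I_2 -> C) : \sum_(i < 2) F i = F (inord 0) + F (inord 1).
Proof.
rewrite !big_ord_recl big_ord0 addr0.
by congr (_ + _); congr F; apply: val_inj; rewrite /= inordK.
Qed.

Lemma qf_expand (Q : 'M[C]_4) (v : 'cV[C]_4) :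
  ((map_mx Num.conj v)^T *m Q *m v) 0 0 =
  \sum_i \sum_j (Num.conj (v i 0)) * Q i j * v j 0.
Proof.
rewrite mxE; under eq_bigr => j _ do rewrite mxE big_distrl /=.
rewrite exchange_big /=; apply: eq_bigr => i _; apply: eq_bigr => j _.
by rewrite !mxE.
Qed.

Lemma ReD (x y : C) : complex.Re (x + y) = complex.Re x + complex.Re y.
Proof. by move: x y => [u w] [u1 w1]. Qed.
Lemma ReN (x : C) : complex.Re (- x) = - complex.Re x.
Proof. by case: x. Qed.
Lemma Re0 : complex.Re (0 : C) = 0. Proof. by []. Qed.
Lemma ReMl (r : R) (x : C) : complex.Re (r%:C * x) = r * complex.Re x.
Proof. by case: x => u w /=; rewrite mul0r subr0. Qed.
Lemma ReRC (r : R) : complex.Re (r%:C) = r. Proof. by []. Qed.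
Lemma ReCMC (r s : R) (x : C) : complex.Re (Num.conj (r%:C) * x * s%:C) = r * complex.Re x * s.
Proof. case: x => u w /=; ring. Qed.

Lemma Re_sum (I : Type) (r : seq I) (P : pred I) (F : I -> C) :
  complex.Re (\sum_(i <- r | P i) F i) = \sum_(i <- r | P i) complex.Re (F i).
Proof. exact: (big_morph (@complex.Re R) ReD Re0). Qed.

Lemma psd_re (Q : 'M[C]_4) (c : 'I_4 -> R) : psd Q ->
  0 <= \sum_i \sum_j c i * complex.Re (Q i j) * c j.
Proof.
move=> /(_ (\col_i (c i)%:C)); rewrite qf_expand lecE => /andP[_].
rewrite Re_sum; under eq_bigr => i _ do rewrite Re_sum.
by under eq_bigr => i _ do under eq_bigr => j _ do rewrite !mxE ReCMC.
Qed.

Lemma ReMr (r : R) (x : C) : complex.Re (x * r%:C) = complex.Re x * r.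
Proof. by case: x => u w /=; ring. Qed.

Lemma costE (p : R) (Q : 'M[C]_4) : cost p Q =
  2 `^ p * (complex.Re (Q (inord 0) (inord 0)) + complex.Re (Q (inord 3) (inord 3))
            - complex.Re (Q (inord 0) (inord 3)) - complex.Re (Q (inord 3) (inord 0)))
  + 2 `^ (p + 1) * (complex.Re (Q (inord 1) (inord 1)) + complex.Re (Q (inord 2) (inord 2))).
Proof.
rewrite /cost /mxtrace sum4 !mxE !sum4 !mxE !inordK //=.
rewrite !mulr0 !addr0 !add0r !mulrN !ReD !ReN !ReMr.
ring.
Qed.
Definition Pmat (x y d1 d2 s : R) : 'M[C]_4 :=
  \matrix_(k < 4, l < 4)
    match nat_of_ord k, nat_of_ord l with
    | 0%N, 0%N => x%:C
    | 0%N, 3%N => s%:C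
    | 1%N, 1%N => d1%:C
    | 2%N, 2%N => d2%:C
    | 3%N, 0%N => s%:C
    | 3%N, 3%N => y%:C
    | _, _ => 0
    end.

Lemma Pi_abE a b : Pi_ab a b = Pmat ((1 + Num.min a b) / 2) ((1 - Num.max a b) / 2)
   (Num.max (b - a) 0 / 2) (Num.max (a - b) 0 / 2)
   (Num.sqrt ((1 + Num.min a b) * (1 - Num.max a b)) / 2).
Proof. by []. Qed.

Lemma Pmat_ptr2 (x y d1 d2 s b : R) : x + d1 = (1 + b) / 2 -> y + d2 = (1 - b) / 2 ->
  ptr2 (Pmat x y d1 d2 s) = rhoz b.
Proof.
move=> h1 h2; apply/matrixP => i j.
case: i => [[|[|//]] ?]; case: j => [[|[|//]] ?]; rewrite !mxE sum2 /tidx /= !mxE !inordK //=.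
all: rewrite ?addr0 //; rewrite -rmorphD; congr (_ %:C); lra.
Qed.

Lemma Pmat_ptr1 (x y d1 d2 s a : R) : x + d2 = (1 + a) / 2 -> y + d1 = (1 - a) / 2 ->
  ptr1 (Pmat x y d1 d2 s) = (rhoz a)^T.
Proof.
move=> h1 h2; apply/matrixP => i j.
case: i => [[|[|//]] ?]; case: j => [[|[|//]] ?]; rewrite !mxE sum2 /tidx /= !mxE !inordK //=.
all: rewrite ?addr0 //; rewrite -rmorphD; congr (_ %:C); lra.
Qed.

Lemma Pmat_tr (x y d1 d2 s : R) : x + y + d1 + d2 = 1 -> \tr (Pmat x y d1 d2 s) = 1.
Proof.
move=> h; rewrite /mxtrace sum4 !mxE !inordK //=.
by rewrite -!rmorphD; congr (_ %:C); lra.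
Qed.

Lemma Pmat_psd (x y d1 d2 s : R) : 0 <= x -> 0 <= y -> 0 <= d1 -> 0 <= d2 ->
  s ^+ 2 = x * y -> psd (Pmat x y d1 d2 s).
Proof.
move=> hx hy h1 h2 hs v; rewrite qf_expand !sum4 !mxE !inordK //=.
rewrite !mulr0 !mul0r !addr0 !add0r.
move: (v _ 0) (v _ 0) (v _ 0) (v _ 0) => [a0 b0] [a1 b1] [a2 b2] [a3 b3].
rewrite -!complexr0; simpc; apply/andP; split; first by apply/eqP; ring.
have -> : a3 * x * a3 + b3 * x * b3 + (a3 * s * a2 + b3 * s * b2) +
   (a1 * d1 * a1 + b1 * d1 * b1) + (a0 * d2 * a0 + b0 * d2 * b0) +
   (a2 * s * a3 + b2 * s * b3 + (a2 * y * a2 + b2 * y * b2)) =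
   (x*a3^+2 + 2*s*a3*a2 + y*a2^+2) + (x*b3^+2 + 2*s*b3*b2 + y*b2^+2)
   + d1 * (a1^+2 + b1^+2) + d2 * (a0^+2 + b0^+2) by ring.
have q1 := quad_nonneg x y s a3 a2 hx hy hs; have q2 := quad_nonneg x y s b3 b2 hx hy hs.
have sq : forall u w : R, 0 <= u ^+ 2 + w ^+ 2 by move=> u w; rewrite addr_ge0 // sqr_ge0.
apply: addr_ge0; [apply: addr_ge0; [exact: addr_ge0|]|]; exact: mulr_ge0.
Qed.

Lemma psd4 (Q : 'M[C]_4) (c0 c1 c2 c3 : R) : psd Q ->
  let q k l := complex.Re (Q (inord k) (inord l)) in
  0 <= c0 * q 0 0 * c0 + c0 * q 0 1 * c1 + c0 * q 0 2 * c2 + c0 * q 0 3 * c3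
     + (c1 * q 1 0 * c0 + c1 * q 1 1 * c1 + c1 * q 1 2 * c2 + c1 * q 1 3 * c3)
     + (c2 * q 2 0 * c0 + c2 * q 2 1 * c1 + c2 * q 2 2 * c2 + c2 * q 2 3 * c3)
     + (c3 * q 3 0 * c0 + c3 * q 3 1 * c1 + c3 * q 3 2 * c2 + c3 * q 3 3 * c3).
Proof.
move=> hQ; have := psd_re Q (fun i : 'I_4 => match nat_of_ord i with
   | 0%N => c0 | 1%N => c1 | 2%N => c2 | _ => c3 end) hQ.
by rewrite !sum4R !inordK.
Qed.
Lemma disc (q0 q3 S : R) : 0 <= q0 -> 0 <= q3 ->
  (forall t, 0 <= t * t * q0 - t * S + q3) -> S ^+ 2 <= 4 * q0 * q3.
Proof.
move=> h0 h3 ht.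
have [e0|n0] := eqVneq q0 0.
  have [eS|nS] := eqVneq S 0; first by rewrite eS e0; lra.
  have := ht ((q3 + 1) / S); rewrite e0 mulr0 sub0r mulrAC -mulrA divff // mulr1.
  lra.
have p0 : 0 < q0 by rewrite lt0r n0.
have := ht (S / (2 * q0)).
have -> : S / (2 * q0) * (S / (2 * q0)) * q0 - S / (2 * q0) * S + q3 =
   q3 - S ^+ 2 / (4 * q0) by field; rewrite n0.
rewrite subr_ge0 ler_pdivrMr; last by lra.
lra.
Qed.
Lemma Pmat_opt (p x y d1 d2 s a b : R) (Q : 'M[C]_4) :
  0 <= s -> s ^+ 2 = x * y -> 0 <= x -> 0 <= y ->
  x + d1 = (1 + b) / 2 -> y + d2 = (1 - b) / 2 ->
  x + d2 = (1 + a) / 2 -> y + d1 = (1 - a) / 2 -> (d1 = 0 \/ d2 = 0) ->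
  Q \in couplings (rhoz a) (rhoz b) -> cost p (Pmat x y d1 d2 s) <= cost p Q.
Proof.
move=> hs0 hs hx hy e1 e2 e3 e4 hd; rewrite inE => -[[hpsd _] [H2 H1]].
rewrite !costE !mxE !inordK //=.
set q00 := complex.Re (Q (inord 0) (inord 0)).
set q11 := complex.Re (Q (inord 1) (inord 1)).
set q22 := complex.Re (Q (inord 2) (inord 2)).
set q33 := complex.Re (Q (inord 3) (inord 3)).
set q03 := complex.Re (Q (inord 0) (inord 3)).
set q30 := complex.Re (Q (inord 3) (inord 0)).
have E1 : q00 + q11 = (1 + b) / 2.
  move/matrixP: H2 => /(_ (inord 0) (inord 0)).
  rewrite !mxE sum2 /tidx !inordK //= => /(congr1 (@complex.Re R)).
  by rewrite ReD eqxx.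
have E2 : q22 + q33 = (1 - b) / 2.
  move/matrixP: H2 => /(_ (inord 1) (inord 1)).
  rewrite !mxE sum2 /tidx !inordK //= => /(congr1 (@complex.Re R)).
  by rewrite ReD eqxx.
have E3 : q00 + q22 = (1 + a) / 2.
  move/matrixP: H1 => /(_ (inord 0) (inord 0)).
  rewrite !mxE sum2 /tidx !inordK //= => /(congr1 (@complex.Re R)).
  by rewrite ReD eqxx.
have E4 : q11 + q33 = (1 - a) / 2.
  move/matrixP: H1 => /(_ (inord 1) (inord 1)).
  rewrite !mxE sum2 /tidx !inordK //= => /(congr1 (@complex.Re R)).
  by rewrite ReD eqxx.
have D0 : 0 <= q00 by have := psd4 Q 1 0 0 0 hpsd; rewrite /=; lra.
have D1 : 0 <= q11 by have := psd4 Q 0 1 0 0 hpsd; rewrite /=; lra.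
have D2 : 0 <= q22 by have := psd4 Q 0 0 1 0 hpsd; rewrite /=; lra.
have D3 : 0 <= q33 by have := psd4 Q 0 0 0 1 hpsd; rewrite /=; lra.
have Ht : forall t, 0 <= t * t * q00 - t * (q03 + q30) + q33.
  by move=> t; have := psd4 Q t 0 0 (-1) hpsd; rewrite /=; lra.
have Disc := @disc q00 q33 (q03 + q30) D0 D3 Ht.
have Hu : x - q00 >= 0 by case: hd => hd; lra.
have Hq : q00 * q33 <= x * y.
  have h3 : q33 = y - (x - q00) by lra.
  have h0 : q00 <= x by lra.
  have h3' : q33 <= y by lra.
  by apply: ler_pM.
have HS : q03 + q30 <= 2 * s.
  have : (q03 + q30) ^+ 2 <= (2 * s) ^+ 2 by rewrite exprMn hs; lra.
  nra.
have core : 0 <= (q00 + q33 - q03 - q30 + 2 * (q11 + q22)) - (x + y - s - s + 2 * (d1 + d2)).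
  by case: hd => hd; lra.
rewrite powRD; last by apply/implyP => _; rewrite pnatr_eq0.
rewrite powRr1 // -subr_ge0.
have -> : 2 `^ p * (q00 + q33 - q03 - q30) + 2 `^ p * 2 * (q11 + q22) -
  (2 `^ p * (x + y - s - s) + 2 `^ p * 2 * (d1 + d2)) =
  2 `^ p * ((q00 + q33 - q03 - q30 + 2 * (q11 + q22)) - (x + y - s - s + 2 * (d1 + d2))) by ring.
by rewrite mulr_ge0 // powR_ge0.
Qed.
Lemma facts (a b : R) : -1 <= a <= 1 -> -1 <= b <= 1 ->
  let x := (1 + Num.min a b) / 2 in let y := (1 - Num.max a b) / 2 in
  let d1 := Num.max (b - a) 0 / 2 in let d2 := Num.max (a - b) 0 / 2 in
  let s := Num.sqrt ((1 + Num.min a b) * (1 - Num.max a b)) / 2 in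
  [/\ [/\ 0 <= s, s ^+ 2 = x * y, 0 <= x, 0 <= y & 0 <= d1], 0 <= d2,
      [/\ x + d1 = (1 + b) / 2, y + d2 = (1 - b) / 2,
      x + d2 = (1 + a) / 2 & y + d1 = (1 - a) / 2], (d1 = 0 \/ d2 = 0) &
      [/\ x + y + d1 + d2 = 1, `|a - b| / 2 = d1 + d2 &
          Num.sqrt ((1 + Num.min a b) * (1 - Num.max a b)) = 2 * s]].
Proof.
move=> /andP[ha1 ha2] /andP[hb1 hb2] x y d1 d2 s.
have hP : 0 <= (1 + Num.min a b) * (1 - Num.max a b).
  have [hab|hab] : a <= b \/ b < a by case: (lerP a b) => h; [left|right].
    by rewrite (min_l hab) (max_r hab); apply: mulr_ge0; lra.
  have hab' : b <= a by lra.
  by rewrite (min_r hab') (max_l hab'); apply: mulr_ge0; lra.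
have s0 : 0 <= s by rewrite /s divr_ge0 // sqrtr_ge0.
have ss : s ^+ 2 = x * y.
  by rewrite /s /x /y expr_div_n sqr_sqrtr //; field.
have s2 : Num.sqrt ((1 + Num.min a b) * (1 - Num.max a b)) = 2 * s.
  by rewrite /s; field.
have [hab|hab] : a <= b \/ b < a by case: (lerP a b) => h; [left|right].
  have hab' : 0 <= b - a by lra.
  have hba : a - b <= 0 by lra.
  move: s0 ss s2; rewrite /s /x /y /d1 /d2 (min_l hab) (max_r hab) (max_l hab') (max_r hba).
  rewrite (ler0_norm hba) => s0 ss s2.
  split; [split|idtac|split|idtac|split] => //; try lra.
have hab' : b - a <= 0 by lra.
have hba : 0 <= a - b by lra.
have hab2 : b <= a by lra.
move: s0 ss s2; rewrite /s /x /y /d1 /d2 (min_r hab2) (max_l hab2) (max_r hab') (max_l hba).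
rewrite (ger0_norm hba) => s0 ss s2.
split; [split|idtac|split|idtac|split] => //; try lra.

Qed.
End S.

Arguments Pmat {R}.

Theorem proposition3p1 (R : realType) (p a b : R) :
  1 <= p -> -1 <= a <= 1 -> -1 <= b <= 1 ->
  optimal_coupling p (rhoz a) (rhoz b) (Pi_ab a b) /\
  (Dsymm p (rhoz a) (rhoz b)) `^ p =
    2 `^ p * (1 + `|a - b| / 2 - Num.sqrt ((1 + Num.min a b) * (1 - Num.max a b))).
Proof.
move=> hp ha hb.
have := @facts R a b ha hb; rewrite Pi_abE.
set x := (1 + Num.min a b) / 2; set y := (1 - Num.max a b) / 2.
set d1 := Num.max (b - a) 0 / 2; set d2 := Num.max (a - b) 0 / 2.
set s := Num.sqrt ((1 + Num.min a b) * (1 - Num.max a b)) / 2.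
move=> [[s0 ss x0 y0 d10] d20 [e1 e2 e3 e4] hd [etr eab esq]].
have Hin : Pmat x y d1 d2 s \in couplings (rhoz a) (rhoz b).
  rewrite inE; split; first split.
  - by apply: Pmat_psd.
  - by apply: Pmat_tr.
  by split; [apply: Pmat_ptr2|apply: Pmat_ptr1].
have Hopt : forall Q, Q \in couplings (rhoz a) (rhoz b) ->
    cost p (Pmat x y d1 d2 s) <= cost p Q.
  by move=> Q HQ; apply: (@Pmat_opt R p x y d1 d2 s a b).
split; first by split.
have Hinf : inf [set cost p P | P in couplings (rhoz a) (rhoz b)] = cost p (Pmat x y d1 d2 s).
  apply/eqP; rewrite eq_le; apply/andP; split.
    apply: ge_inf.
      exists (cost p (Pmat x y d1 d2 s)) => _ [Q HQ <-]; apply: Hopt; exact: mem_set.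
    by exists (Pmat x y d1 d2 s) => //; rewrite inE in Hin.
  apply: lb_le_inf.
    by exists (cost p (Pmat x y d1 d2 s)); exists (Pmat x y d1 d2 s) => //; rewrite inE in Hin.
  move=> _ [Q HQ <-]; apply: Hopt; exact: mem_set.
have Hc : cost p (Pmat x y d1 d2 s) = 2 `^ p * (1 + `|a - b| / 2 - Num.sqrt ((1 + Num.min a b) * (1 - Num.max a b))).
  rewrite costE !mxE !inordK //= eab esq.
  rewrite powRD; last by apply/implyP => _; rewrite pnatr_eq0.
  rewrite powRr1 //. 
  have -> : 1 + (d1 + d2) - 2 * s = x + y - s - s + 2 * (d1 + d2) by lra.
  ring.
rewrite /Dsymm.
rewrite Hinf -powRrM mulVf; last by apply: lt0r_neq0; lra.
rewrite powRr1 // Hc mulr_ge0 ?powR_ge0 //.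
rewrite eab esq.
have hxy : 2 * s <= x + y.
  have h : (2 * s) ^+ 2 <= (x + y) ^+ 2 by rewrite exprMn ss; have := sqr_ge0 (x - y); nra.
  nra.
lra.
Qed.
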